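(* Let $\rho$ be a probability distribution on $\mathbb N_0$ with finite first moment, $\sum_k k\rho_k<\infty$, and let $\mathcal T$ be a Galton–Watson tree $\mathrm{GW}(\rho)$. Then for every non-decreasing family of positive constants $(C_{k,T})$ and every finite measure $\varsigma$ on $\mathcal J$, $\mathcal T$ is a.s. finitely dissociable.
   Context: $\mathrm{GW}(\rho)$ is the random rooted tree in which the root and every other vertex independently have a number of children distributed according to $\rho$. Finite dissociability. Fix a countable set $\mathcal J$, a finite measure $\varsigma$ on $\mathcal J$ with $\varsigma(\mathcal J)>0$, and constants $C_{k,T}\in(0,\infty)$, $k\in\mathbb N$, $T\in\mathbb R_+$, non-decreasing in each index. For a vertex $v$ of a graph $G$ let $\mathrm{cl}_v$ denote $v$ together with its neighbours. A deterministic locally finite graph $G$ is finitely dissociable if for every $T\in(0,\infty)$ there is $\Delta\in(0,T]$ such that the following holds: if $(N_v)_{v\in V_G}$ are i.i.d. Poisson random measures on $\mathbb R_+^2\times\mathcal J$ with intensity $\mathrm{Leb}^2\otimes\varsigma$ and a vertex $v$ is called active when $N_v((0,\Delta]\times(0,C_{|\mathrm{cl}_v|,T}]\times\mathcal J)>0$ (so vertices are independently active with probability $1-\exp(-\Delta\varsigma(\mathcal J)C_{|\mathrm{cl}_v|,T})$), then a.s. every connected component of the subgraph of $G$ induced by the active vertices is finite. A random graph is a.s. finitely dissociable if its realization is finitely dissociable almost surely. *)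

(* Defs.v *)
From HB Require Import structures.
From mathcomp Require Import all_boot all_order all_algebra.
From mathcomp Require Import all_classical all_reals all_analysis.
Set Implicit Arguments. Unset Strict Implicit. Unset Printing Implicit Defensive.
Import Order.TTheory GRing.Theory Num.Theory numFieldNormedType.Exports.
Local Open Scope classical_set_scope.
Local Open Scope ring_scope.

Definition discrete_rv {d} {Omega : measurableType d} {T : Type}
  (X : Omega -> T) : Prop := forall x : T, measurable (X @^-1` [set x]).

Definition mutually_independent {d} {Omega : measurableType d}
  {R : realType} (P : probability Omega R) {I : eqType} {T : Type}
  (S : set I) (X : I -> Omega -> T) : Prop :=
  forall (F : seq I) (A : I -> set T), uniq F -> (forall i, i \in F -> S i) ->
    P (\bigcap_(i in [set i | i \in F]) (X i @^-1` A i)) =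
    ((\prod_(i <- F) fine (P (X i @^-1` A i)))%:E)%E.

(** Locally finite graphs are given by a vertex set [vert : set V] and
    finite duplicate-free neighbour lists [nb v]. *)

Definition cl_size {V : Type} (nb : V -> seq V) (v : V) : nat := (size (nb v)).+1.

Inductive conn {V : eqType} (A : set V) (nb : V -> seq V) (v : V) : V -> Prop :=
  | conn_refl : A v -> conn A nb v v
  | conn_step w w' : conn A nb v w -> w' \in nb w -> A w' -> conn A nb v w'.

Definition all_components_finite {V : eqType} (A : set V) (nb : V -> seq V) : Prop :=
  forall v, A v -> finite_set [set w | conn A nb v w].

(** The activity indicators are independent
    Bernoulli variables with P(v active) = 1 - exp(-Delta varsigma(J) C_{|cl_v|,T}),
    which is exactly the law of the events N_v((0,Delta]x(0,C]xJ) > 0 for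
    i.i.d. Poisson random measures N_v of intensity Leb^2 (x) varsigma. *)
Definition finitely_dissociable {R : realType} {dJ} {J : measurableType dJ}
  (vs : {finite_measure set J -> \bar R}) (C : nat -> R -> R)
  {V : eqType} (vert : set V) (nb : V -> seq V) : Prop :=
  forall T : R, 0 < T ->
  exists Delta : R, 0 < Delta /\ Delta <= T /\
    forall (d : measure_display) (Omega : measurableType d)
           (P : probability Omega R) (act : V -> Omega -> bool),
      (forall v, vert v -> discrete_rv (act v)) ->
      mutually_independent P vert act ->
      (forall v, vert v -> P (act v @^-1` [set true]) =
          (1 - expR (- (Delta * fine (vs setT) * C (cl_size nb v) T)))%:E) ->
      {ae P, forall w, all_components_finite
                         [set v | vert v /\ act v w] nb}.

(** Galton--Watson trees in Ulam--Harris encoding: vertices are words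
    u = [i_1; ...; i_k] of natural numbers, x u is the number of children
    of u, the root is [::] and the children of u are rcons u i, i < x u. *)
Definition gw_vert (x : seq nat -> nat) : set (seq nat) :=
  [set u | forall j, (j < size u)%N -> (nth 0 u j < x (take j u))%N].

Definition gw_nb (x : seq nat -> nat) (u : seq nat) : seq (seq nat) :=
  (if u is [::] then [::] else [:: take (size u).-1 u])
  ++ [seq rcons u i | i <- iota 0 (x u)].

(* Main.v *)
Require Import Defs.
From HB Require Import structures.
From mathcomp Require Import all_boot all_order all_algebra.
From mathcomp Require Import all_classical all_reals all_analysis.
From mathcomp Require Import ring lra measurable_realfun.
Import Order.TTheory GRing.Theory Num.Theory numFieldNormedType.Exports.
Local Open Scope classical_set_scope.
Local Open Scope ring_scope.

Fixpoint pathb (x : seq nat -> nat) (f : seq nat -> bool) (a : seq nat) (n : nat) : bool :=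
  f a && (if n is n'.+1 then has (fun i => pathb x f (rcons a i) n') (iota 0 (x a)) else true).

Lemma pathbS x (f : seq nat -> bool) a n : pathb x f a n.+1 -> pathb x f a n.
Proof.
elim: n a => [|n IH] a /=; first by case/andP=> ->.
case/andP=> -> /hasP [i Hi Hp] /=; apply/hasP; exists i => //; exact: IH.
Qed.

Lemma pathb_le x (f : seq nat -> bool) a n m : (n <= m)%N -> pathb x f a m -> pathb x f a n.
Proof.
move=> /subnK <-; elim: (m - n)%N => [|k IH] //= H; apply: IH; exact: pathbS.
Qed.

Lemma pathb_prefixes x (f : seq nat -> bool) s a :
  gw_vert x (a ++ s) -> (forall i, (i <= size s)%N -> f (a ++ take i s)) ->
  pathb x f a (size s).
Proof.
elim: s a => [|i s IH] a Hv Hf /=.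
  by have := Hf 0%N (leqnn _); rewrite take0 cats0 => ->.
have := Hf 0%N isT; rewrite take0 cats0 => -> /=.
apply/hasP; exists i.
  have := Hv (size a); rewrite size_cat /= addnS ltnS leq_addr => /(_ isT).
  by rewrite nth_cat ltnn subnn /= take_cat ltnn subnn take0 cats0 mem_iota add0n.
apply: IH; first by rewrite cat_rcons.
by move=> j Hj; have := Hf j.+1 Hj; rewrite /= -cat_rcons.
Qed.

Lemma conn_shape x (A : set (seq nat)) v w :
  conn A (gw_nb x) v w -> exists j s, [/\ (j <= size v)%N, w = take j v ++ s &
     forall i, (i <= size s)%N -> A (take j v ++ take i s)].
Proof.
elim=> [Av|w1 w2 _ [j [s [Hj E H]]] Hnb Aw2].
  exists (size v), [::]; split => //; first by rewrite take_size cats0.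
  by move=> i; rewrite leqn0 => /eqP ->; rewrite take_size cats0.
move: Hnb; rewrite /gw_nb mem_cat => /orP [].
  case Ew1: w1 => [//|y w1']; rewrite -Ew1 inE => /eqP Ew2.
  have w1n : w1 != [::] by rewrite Ew1.
  have sz : size (take j v) = j by rewrite size_takel.
  case: s E H => [|z s] E H.
    rewrite cats0 in E.
    have Hj0 : (0 < j)%N.
      case: j Hj E {H sz} => [|j] //; by rewrite take0 => _ E; rewrite E in w1n.
    have Ew2' : w2 = take j.-1 v.
      by rewrite Ew2 E sz take_takel ?leq_pred.
    exists j.-1, [::]; split.
    - by rewrite (leq_trans (leq_pred _) Hj).
    - by rewrite cats0.
    - by move=> i; rewrite leqn0 => /eqP ->; rewrite take0 cats0 -Ew2'.
  exists j, (take (size s) (z :: s)); split => //.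
    rewrite Ew2 E size_cat sz /= addnS /= take_cat sz ltnNge leq_addr /=.
    by rewrite addKn.
  move=> i Hi; rewrite take_takel; first (apply: H; apply: (leq_trans Hi)).
    by rewrite size_take /=; case: ltnP.
  by rewrite size_take /= ltnS leqnn in Hi.
case/mapP=> i _ Ew2; rewrite Ew2 in Aw2; exists j, (rcons s i); split => //.
  by rewrite Ew2 E rcons_cat.
move=> k; rewrite size_rcons leq_eqVlt => /orP [/eqP ->|Hk].
  by rewrite [take _ (rcons _ _)]take_oversize ?size_rcons // -rcons_cat -E.
by rewrite -cats1 takel_cat; [apply: H|].
Qed.
Definition Sset (x : seq nat -> nat) (n : nat) (a : seq nat) : set (seq nat) :=
  [set s | (size s < n)%N /\ forall i, (i < size s)%N -> (nth 0%N s i < x (a ++ take i s))%N].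

Lemma finite_Sset x n : forall a, finite_set (Sset x n a).
Proof.
elim: n => [|n IH] a.
  apply: (sub_finite_set _ (finite_set0 _)) => s [].
  by rewrite ltn0.
apply: (sub_finite_set (B := [set [::]] `|` \bigcup_(i in `I_(x a)) (cons i @` Sset x n (rcons a i)))).
  case=> [|i s] [Hs Hv]; first by left.
  right; exists i.
    by have := Hv 0%N isT; rewrite /= cats0.
  exists s => //; split => // j Hj.
  by have := Hv j.+1 Hj; rewrite /= -cat_rcons.
rewrite finite_setU; split; first exact: finite_set1.
apply: bigcup_finite; first exact: finite_II.
by move=> i _; apply: finite_image.
Qed.

Lemma uniform_n x (f : seq nat -> bool) (P : seq nat -> Prop) (v : seq nat) :
  (forall a, P a -> exists n, ~~ pathb x f a n) ->
  forall m, exists n, forall j, (j < m)%N -> P (take j v) -> ~~ pathb x f (take j v) n.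
Proof.
move=> H; elim=> [|m [n Hn]]; first by exists 0%N.
have [Pm|nPm] := pselect (P (take m v)).
  have [k Hk] := H _ Pm.
  exists (maxn n k) => j; rewrite ltnS leq_eqVlt => /orP [/eqP ->|Hj] Pj.
    by apply: contra Hk; apply: pathb_le; rewrite leq_maxr.
  by apply: contra (Hn j Hj Pj); apply: pathb_le; rewrite leq_maxl.
exists n => j; rewrite ltnS leq_eqVlt => /orP [/eqP ->|Hj] Pj //.
exact: Hn.
Qed.

Lemma graph_finite x (f : seq nat -> bool) :
  (forall a, gw_vert x a -> f a -> exists n, ~~ pathb x f a n) ->
  all_components_finite [set v | gw_vert x v /\ f v] (gw_nb x).
Proof.
move=> H v Av.
have [n Hn] := @uniform_n x f [set v | gw_vert x v /\ f v] v
   (fun a Pa => H a Pa.1 Pa.2) (size v).+1.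
apply: (sub_finite_set _ (finite_Sset x (size v + n) [::])) => w Cw.
have [j [s [Hj Ew HA]]] := @conn_shape x _ v w Cw.
have Aw : gw_vert x w.
  case: Cw => [[]|w1 w2 _ _ []] //.
split; last first.
  by move=> i Hi; rewrite cat0s; apply: Aw.
have Hs : (size s < n)%N.
  rewrite ltnNge; apply/negP => Hns.
  have Aj : gw_vert x (take j v) /\ f (take j v).
    by have := HA 0%N isT; rewrite take0 cats0.
  have Hp : pathb x f (take j v) n.
    apply: (@pathb_le x f _ _ _ Hns); apply: pathb_prefixes; first by rewrite -Ew.
    by move=> i Hi; have [] := HA i Hi.
  by have := Hn j Hj Aj; rewrite Hp.
rewrite Ew size_cat size_takel //.
by rewrite -addnS leq_add.
Qed.
Definition actL {T : Type} (act : seq nat -> T -> bool) (L : seq (seq nat)) : set T :=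
  [set w | all (fun v => act v w) L].
Definition PathS {T : Type} (x : seq nat -> nat) (act : seq nat -> T -> bool) a n : set T :=
  [set w | pathb x (act^~ w) a n].
Fixpoint Zf (R : realType) (pp : nat -> R) (x : seq nat -> nat) (a : seq nat) (n : nat) : R :=
  if n is n'.+1 then pp (x a) * \sum_(i < x a) Zf R pp x (rcons a i) n' else 1.
Arguments Zf {R}.
Definition pref (a v : seq nat) : bool := take (size a) v == a.

Lemma Zf_ge0 (R : realType) (pp : nat -> R) x a n :
  (forall k, 0 <= pp k) -> 0 <= Zf pp x a n.
Proof.
move=> pp0; elim: n a => [|n IH] a /=; first exact: ler01.
by apply: mulr_ge0 => //; apply: sumr_ge0 => i _; apply: IH.
Qed.

Lemma actL_measurable d (Omega : measurableType d) (act : seq nat -> Omega -> bool)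
  (vert : set (seq nat)) L :
  (forall v, vert v -> discrete_rv (act v)) -> (forall v, v \in L -> vert v) ->
  measurable (actL act L).
Proof.
move=> Hd; elim: L => [|v L IH] HL.
  by rewrite /actL /=; rewrite (_ : [set _ | true] = setT) //; apply/seteqP; split.
have -> : actL act (v :: L) = act v @^-1` [set true] `&` actL act L.
  by apply/seteqP; split => w /=; [move/andP => [H1 H2]; split| move=> [H1 H2]; apply/andP].
apply: measurableI; first by apply: Hd; apply: HL; rewrite inE eqxx.
by apply: IH => u Hu; apply: HL; rewrite inE Hu orbT.
Qed.

Lemma actL_prob (R : realType) d (Omega : measurableType d) (P : probability Omega R)
  (act : seq nat -> Omega -> bool) (vert : set (seq nat)) L :
  mutually_independent P vert act -> uniq L -> (forall v, v \in L -> vert v) ->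
  P (actL act L) = (\prod_(v <- L) fine (P (act v @^-1` [set true])))%:E.
Proof.
move=> Hi uL HL; rewrite -(Hi L (fun _ => [set true]) uL HL); congr (P _).
apply/seteqP; split => w /=.
  by move/allP => H v /= Hv; apply/H.
by move=> H; apply/allP => v Hv; apply: (H v Hv).
Qed.

Lemma PathS_measurable d (Omega : measurableType d) (act : seq nat -> Omega -> bool) x n :
  (forall v, gw_vert x v -> discrete_rv (act v)) ->
  forall a, gw_vert x a -> measurable (PathS x act a n).
Proof.
move=> Hd; elim: n => [|n IH] a Ha.
  rewrite /PathS /=; rewrite (_ : [set _ | _] = act a @^-1` [set true]).
    exact: Hd.
  by apply/seteqP; split => w /=; rewrite andbT.
have -> : PathS x act a n.+1 = act a @^-1` [set true] `&`
    \big[setU/set0]_(i < x a) PathS x act (rcons a i) n.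
  apply/seteqP; split => w /=.
    case/andP => -> /hasP [i]; rewrite mem_iota add0n => /andP [_ Hi] Hp; split => //.
    rewrite -(bigcup_mkord _ (fun i => PathS x act (rcons a i) n)); exists i => //.
  move=> [Ha' ]; rewrite -(bigcup_mkord _ (fun i => PathS x act (rcons a i) n)) => -[i Hi Hp] /=.
  rewrite /PathS /= Ha' /=.
  by apply/hasP; exists i => //; rewrite mem_iota add0n.
apply: measurableI; first exact: Hd.
apply: bigsetU_measurable => i _; apply: IH.
move=> j; rewrite size_rcons ltnS leq_eqVlt => /orP [/eqP ->|Hj].
  by rewrite nth_rcons ltnn eqxx -cats1 take_cat ltnn subnn take0 cats0.
by rewrite nth_rcons Hj -cats1 take_cat Hj; apply: Ha.
Qed.
Lemma vert_rcons x a k : gw_vert x a -> (k < x a)%N -> gw_vert x (rcons a k).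
Proof.
move=> Ha Hk j; rewrite size_rcons ltnS leq_eqVlt => /orP [/eqP ->|Hj].
  by rewrite nth_rcons ltnn eqxx -cats1 take_cat ltnn subnn take0 cats0.
by rewrite nth_rcons Hj -cats1 take_cat Hj; apply: Ha.
Qed.

Lemma pref_refl a : pref a a.
Proof. by rewrite /pref take_size. Qed.

Lemma pref_rcons a k v : pref (rcons a k) v -> pref a v.
Proof.
rewrite /pref size_rcons => /eqP E.
by rewrite -(take_takel _ (leqnSn (size a))) E -cats1 takel_cat // take_size.
Qed.

Lemma not_pref_rcons a k : ~~ pref (rcons a k) a.
Proof.
rewrite /pref size_rcons take_oversize //; apply/eqP => E.
by have := congr1 size E; rewrite size_rcons => /n_Sn.
Qed.

Lemma quenched (R : realType) d (Omega : measurableType d) (P : probability Omega R)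
  (act : seq nat -> Omega -> bool) x (pp : nat -> R) :
  (forall v, gw_vert x v -> discrete_rv (act v)) ->
  mutually_independent P (gw_vert x) act ->
  (forall k, 0 <= pp k) ->
  (forall v, gw_vert x v -> (P (act v @^-1` [set true]) <= (pp (x v))%:E)%E) ->
  forall n a L, gw_vert x a -> uniq L -> (forall v, v \in L -> gw_vert x v) ->
  (forall v, v \in L -> ~~ pref a v) ->
  (P (actL act L `&` PathS x act a n) <=
     ((\prod_(v <- L) fine (P (act v @^-1` [set true]))) * Zf pp x a n)%:E)%E.
Proof.
move=> Hd Hi pp0 Hpp.
have q0 v : 0 <= fine (P (act v @^-1` [set true])).
  by apply: fine_ge0; apply: measure_ge0.
have qE v : gw_vert x v -> (fine (P (act v @^-1` [set true])))%:E = P (act v @^-1` [set true]).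
  by move=> Hv; rewrite fineK // fin_num_measure //; apply: Hd.
have qpp v : gw_vert x v -> fine (P (act v @^-1` [set true])) <= pp (x v).
  by move=> Hv; rewrite -lee_fin qE //; apply: Hpp.
elim=> [|n IH] a L Ha uL HL HpL.
  rewrite /= mulr1 -(@actL_prob R d Omega P act (gw_vert x) L Hi uL HL); apply: le_measure; rewrite ?inE.
  - apply: measurableI; first exact: actL_measurable Hd HL.
    exact: PathS_measurable.
  - exact: actL_measurable Hd HL.
  - exact: subIsetl.
have HaL : a \notin L by apply/negP => /HpL; rewrite pref_refl.
have HaL' : forall v, v \in a :: L -> gw_vert x v.
  by move=> v; rewrite inE => /orP [/eqP ->//|]; exact: HL.
have mF k : `I_(x a) k -> measurable (actL act (a :: L) `&` PathS x act (rcons a k) n).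
  move=> Hk; apply: measurableI; first exact: actL_measurable Hd HaL'.
  by apply: PathS_measurable => //; apply: vert_rcons.
have sub : actL act L `&` PathS x act a n.+1 `<=`
    \big[setU/set0]_(k < x a) (actL act (a :: L) `&` PathS x act (rcons a k) n).
  move=> w [HwL] /andP [Hwa /hasP [k]]; rewrite mem_iota add0n => /andP [_ Hk] Hp.
  rewrite -(bigcup_mkord _ (fun k => actL act (a :: L) `&` PathS x act (rcons a k) n)).
  by exists k => //; split => //; rewrite /actL /= Hwa.
have mA : measurable (actL act L `&` PathS x act a n.+1).
  apply: measurableI; first exact: actL_measurable Hd HL.
  exact: PathS_measurable.
apply: (le_trans (content_subadditive P mF mA sub)).
apply: (@le_trans _ _ (\sum_(k < x a)
   ((\prod_(v <- a :: L) fine (P (act v @^-1` [set true]))) * Zf pp x (rcons a k) n)%:E)).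
  apply: lee_sum => k _; apply: IH => //.
  - exact: vert_rcons.
  - by rewrite /= HaL.
  - move=> v; rewrite inE => /orP [/eqP ->|Hv]; first exact: not_pref_rcons.
    by apply: contra (HpL v Hv); apply: pref_rcons.
rewrite sumEFin lee_fin -mulr_sumr big_cons /= -mulrA mulrCA.
apply: ler_wpM2l; first by apply: prodr_ge0 => v _.
apply: ler_wpM2r; first by apply: sumr_ge0 => k _; apply: Zf_ge0.
exact: qpp.
Qed.
Lemma discrete_mfun d (Omega : measurableType d) (X : Omega -> nat) :
  discrete_rv X -> measurable_fun setT X.
Proof.
move=> HX _ Y _; rewrite setTI.
have -> : X @^-1` Y = \bigcup_(k in Y) X @^-1` [set k].
  by apply/seteqP; split => w /=; [move=> Hw; exists (X w)| case=> k Hk /= ->].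
by apply: bigcup_measurable => k _; exact: HX.
Qed.

Lemma measurable_dep (R : realType) d (Omega : measurableType d) (X : Omega -> nat)
  (G : nat -> Omega -> R) :
  discrete_rv X -> (forall k, measurable_fun setT (G k)) ->
  measurable_fun setT (fun w => G (X w) w).
Proof.
move=> HX HG _ Y mY; rewrite setTI.
have -> : (fun w => G (X w) w) @^-1` Y = \bigcup_k (X @^-1` [set k] `&` (G k @^-1` Y)).
  apply/seteqP; split => w /=; first by move=> Hw; exists (X w).
  by case=> k _ [/= -> ].
apply: bigcupT_measurable => k; apply: measurableI; first exact: HX.
by have := HG k measurableT Y mY; rewrite setTI.
Qed.

Definition EL {Omega : Type} (xi : seq nat -> Omega -> nat) (L : seq (seq nat * nat)) : set Omega :=
  [set w | all (fun vk => xi vk.1 w == vk.2) L].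

Lemma EL_measurable d (Omega : measurableType d) (xi : seq nat -> Omega -> nat) L :
  (forall u, discrete_rv (xi u)) -> measurable (EL xi L).
Proof.
move=> Hd; elim: L => [|[v k] L IH].
  by rewrite /EL /=; rewrite (_ : [set _ | true] = setT) //; apply/seteqP; split.
have -> : EL xi ((v, k) :: L) = xi v @^-1` [set k] `&` EL xi L.
  apply/seteqP; split => w /=; first by case/andP => /eqP -> H; split.
  by case=> /eqP H1 H; apply/andP.
by apply: measurableI => //; exact: Hd.
Qed.

Lemma uniq_fst (L : seq (seq nat * nat)) v k k' :
  uniq (map fst L) -> (v, k) \in L -> (v, k') \in L -> k = k'.
Proof.
elim: L => [//|[u j] L IH] /= /andP [Hu uL]; rewrite !inE.
case/orP => [/eqP [Ev Ek]|H1]; case/orP => [/eqP [Ev' Ek']|H2].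
- by rewrite Ek Ek'.
- by move: Hu; rewrite -Ev (map_f fst H2).
- by move: Hu; rewrite -Ev' (map_f fst H1).
- exact: IH.
Qed.

Lemma EL_prob (R : realType) d (Omega : measurableType d) (P : probability Omega R)
  (rho : nat -> R) (xi : seq nat -> Omega -> nat) L :
  mutually_independent P setT xi -> (forall u k, P (xi u @^-1` [set k]) = (rho k)%:E) ->
  uniq (map fst L) -> P (EL xi L) = (\prod_(vk <- L) rho vk.2)%:E.
Proof.
move=> Hi Hl uL.
have := Hi (map fst L) (fun v => [set k | (v, k) \in L]) uL (fun _ _ => I).
have -> : \bigcap_(i in [set i | i \in map fst L]) (xi i @^-1` [set k | (i, k) \in L]) = EL xi L.
  apply/seteqP; split => w /=.
    move=> H; apply/allP => [[v k]] Hvk /=.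
    have := H v (map_f fst Hvk) => /= H'.
    by rewrite (@uniq_fst L _ _ _ uL H' Hvk).
  move/allP => H v /mapP [[u k] Hu ->] /=.
  by have /eqP -> := H _ Hu.
move=> ->; rewrite big_map; congr (_%:E); apply: eq_big_seq => [[v k]] Hvk /=.
have -> : [set k0 | (v, k0) \in L] = [set k].
  apply/seteqP; split => j /=; first by move=> Hj; rewrite (@uniq_fst L _ _ _ uL Hj Hvk).
  by move=> ->.
by rewrite Hl.
Qed.
Lemma Zf_measurable (R : realType) d (Omega : measurableType d) (xi : seq nat -> Omega -> nat)
  (pp : nat -> R) :
  (forall u, discrete_rv (xi u)) ->
  forall n a, measurable_fun setT (fun w => Zf pp (xi^~ w) a n).
Proof.
move=> Hd; elim=> [|n IH] a /=; first exact: measurable_cst.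
apply: (@measurable_dep R d Omega (xi a)
  (fun k w => pp k * \sum_(i < k) Zf pp (xi^~ w) (rcons a i) n)) => // k.
apply: measurable_realfun.measurable_funM; first exact: measurable_cst.
by apply: measurable_sum => i; apply: IH.
Qed.

Lemma nneseries_single (R : realType) (f : nat -> \bar R) k0 :
  (forall k, (0 <= f k)%E) -> (forall k, k != k0 -> f k = 0%E) ->
  (\sum_(k <oo) f k = f k0)%E.
Proof.
move=> f0 fk.
rewrite (@nneseries_split R f 0 k0.+1) // add0n eseries0 ?adde0; last first.
  by move=> i Hi _; apply: fk; rewrite neq_ltn Hi orbT.
rewrite big_nat_recr //= big1_seq ?add0e // => i /andP [_].
by rewrite mem_index_iota => /andP [_ Hi]; apply: fk; rewrite ltn_eqF.
Qed.

Lemma indic_EL {Omega : Type} (R : realType) (xi : seq nat -> Omega -> nat) L w :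
  (\1_(EL xi L) w : R) = (all (fun vk => xi vk.1 w == vk.2) L)%:R.
Proof.
rewrite indicE; suff -> : (w \in EL xi L) = all (fun vk => xi vk.1 w == vk.2) L by [].
by apply/idP/idP => H; [rewrite inE in H | rewrite inE].
Qed.
Lemma annealed (R : realType) (rho : nat -> R) d (Omega : measurableType d)
  (P : probability Omega R) (xi : seq nat -> Omega -> nat) (pp : nat -> R) :
  (forall u, discrete_rv (xi u)) ->
  mutually_independent P setT xi ->
  (forall u k, P (xi u @^-1` [set k]) = (rho k)%:E) ->
  (forall k, 0 <= rho k) -> (forall k, 0 <= pp k) ->
  (\sum_(k <oo) ((k%:R * rho k * pp k)%:E) <= (2^-1)%:E)%E ->
  forall n a L, uniq (map fst L) -> (forall v, v \in map fst L -> ~~ pref a v) ->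
  (\int[P]_w ((\1_(EL xi L) w * Zf pp (xi^~ w) a n)%:E) <=
     ((2^-1) ^+ n * \prod_(vk <- L) rho vk.2)%:E)%E.
Proof.
move=> Hd Hi Hl rho0 pp0 Hm.
have mEL L : measurable (EL xi L) by apply: EL_measurable.
have mZ := @Zf_measurable R d Omega xi pp Hd.
have i0 L w : 0 <= (\1_(EL xi L) w : R) by rewrite indicE ler0n.
elim=> [|n IH] a L uL HpL.
  under eq_integral do rewrite /= mulr1.
  rewrite integral_indic // setIT expr0 mul1r le_eqVlt; apply/orP; left; apply/eqP.
  exact: (@EL_prob R d Omega P rho xi L Hi Hl uL).
pose g : nat -> Omega -> \bar R := fun k w => ((\1_(EL xi ((a, k) :: L)) w) *
   (pp k * \sum_(i < k) Zf pp (xi^~ w) (rcons a i) n))%:E.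
have g0 k w : (0 <= g k w)%E.
  rewrite lee_fin; apply: mulr_ge0 => //; apply: mulr_ge0 => //.
  by apply: sumr_ge0 => i _; apply: Zf_ge0.
have mg (k : nat) : measurable_fun setT (g k).
  apply/measurable_EFinP; apply: measurable_realfun.measurable_funM.
    exact: measurable_realfun.measurable_indic.
  apply: measurable_realfun.measurable_funM; first exact: measurable_cst.
  by apply: measurable_sum => i; apply: mZ.
rewrite (eq_integral (fun w => (\sum_(k <oo) g k w)%E)); last first.
  move=> w _; rewrite (@nneseries_single R _ (xi a w)) //.
    by rewrite /g /= !indic_EL /= eqxx.
  by move=> k Hk; rewrite /g indic_EL /= eq_sym (negbTE Hk) mul0r.
rewrite integral_nneseries //.
have HaL : a \notin map fst L by apply/negP => /HpL; rewrite pref_refl.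
have uL' : uniq (map fst ((a, 0%N) :: L)) by rewrite /= HaL.
apply: (@le_trans _ _ (\sum_(k <oo) (((2^-1) ^+ n * \prod_(vk <- L) rho vk.2)%:E *
   (k%:R * rho k * pp k)%:E))%E).
  apply: lee_nneseries => [k _ _|k _]; first exact: integral_ge0.
  rewrite (eq_integral (fun w => (pp k)%:E *
      \sum_(i < k) ((\1_(EL xi ((a, k) :: L)) w * Zf pp (xi^~ w) (rcons a i) n)%:E))%E); last first.
    by move=> w _; rewrite sumEFin -EFinM /g -mulr_sumr mulrCA.
  have mi (i : 'I_k) : measurable_fun setT
      (fun w => (\1_(EL xi ((a, k) :: L)) w * Zf pp (xi^~ w) (rcons a i) n)%:E).
    apply/measurable_EFinP.
    apply: measurable_realfun.measurable_funM; last exact: mZ.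
    exact: measurable_realfun.measurable_indic.
  have pi (i : 'I_k) w : setT w ->
      (0 <= (\1_(EL xi ((a, k) :: L)) w * Zf pp (xi^~ w) (rcons a i) n)%:E)%E.
    move=> _; rewrite lee_fin; apply: mulr_ge0 => //; exact: Zf_ge0.
  rewrite ge0_integralZl_EFin //; try (by move=> w _; apply: sume_ge0 => i _; exact: pi);
    try (by apply: emeasurable_sum => i; exact: mi).
  rewrite (@ge0_integral_sum _ _ R P setT measurableT _
    (fun (i : 'I_k) w => (\1_(EL xi ((a, k) :: L)) w * Zf pp (xi^~ w) (rcons a i) n)%:E) mi pi).
  apply: (@le_trans _ _ ((pp k)%:E * \sum_(i < k)
      ((2^-1) ^+ n * \prod_(vk <- (a, k) :: L) rho vk.2)%:E)%E).
    apply: lee_wpmul2l; first by rewrite lee_fin.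
    apply: lee_sum => i _; apply: IH; first by rewrite /= HaL.
    move=> v; rewrite /= inE => /orP [/eqP ->|Hv]; first exact: not_pref_rcons.
    by apply: contra (HpL v Hv); apply: pref_rcons.
  rewrite sumEFin -EFinM lee_fin sumr_const card_ord big_cons /= -mulr_natr.
  rewrite le_eqVlt; apply/orP; left; apply/eqP; ring.
rewrite nneseriesZl; last first.
  by move=> k _; rewrite lee_fin; apply: mulr_ge0 => //; apply: mulr_ge0.
apply: (le_trans (lee_wpmul2l _ Hm)).
  rewrite lee_fin; apply: mulr_ge0; first by apply: exprn_ge0.
  by apply: prodr_ge0 => vk _.
by rewrite -EFinM lee_fin exprSr; rewrite le_eqVlt; apply/orP; left; apply/eqP; ring.
Qed.
Lemma choose_delta (R : realType) (rho : nat -> R) (c : R) (Cf : nat -> R) :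
  (forall k, 0 <= rho k) -> cvg (series (fun k => k%:R * rho k) @ \oo) -> 0 < c ->
  (forall k, (1 <= k)%N -> 0 < Cf k) ->
  (forall k k', (1 <= k)%N -> (k <= k')%N -> Cf k <= Cf k') ->
  exists D, 0 < D /\ D <= 1 /\
   (\sum_(k <oo) ((k%:R * rho k * (1 - expR (- (D * c * Cf k.+2))))%:E) <= (2^-1)%:E)%E.
Proof.
move=> rho0 cu c0 Cpos Cmono.
set u := fun k => k%:R * rho k.
have u0 k : 0 <= u k by rewrite /u mulr_ge0.
have [K HK] : exists K, `|limn (series u) - series u K| <= 4^-1.
  have := (cvgrPdist_le _ _).1 cu (4^-1) ltac:(by []).
  by case=> K _ HK; exists K; apply: HK => /=.
have sK0 : 0 <= series u K by rewrite seriesEnat /=; apply: sumr_ge0 => k _.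
have CK : 0 < Cf K.+1 by apply: Cpos.
set B := c * Cf K.+1 * series u K.
have B0 : 0 <= B by rewrite /B; apply: mulr_ge0 => //; apply: mulr_ge0; apply: ltW.
set D := (4 * (B + 1))^-1.
have HD : D * (4 * (B + 1)) = 1 by rewrite mulVf //; apply/lt0r_neq0; lra.
have D0 : 0 < D by rewrite /D invr_gt0; lra.
exists D; split => //; split; first by nra.
have pp_le k : 1 - expR (- (D * c * Cf k.+2)) <= D * c * Cf k.+2.
  by have := expR_ge1Dx (- (D * c * Cf k.+2)); lra.
have pp0 k : 0 <= 1 - expR (- (D * c * Cf k.+2)).
  have : expR (- (D * c * Cf k.+2)) <= 1.
    rewrite expR_le1 oppr_le0; apply: mulr_ge0; first by apply: mulr_ge0; apply: ltW.
    by apply: ltW; apply: Cpos.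
  lra.
set a := fun k => u k * (1 - expR (- (D * c * Cf k.+2))).
have a0 k : 0 <= a k by rewrite /a; apply: mulr_ge0.
apply: lime_le; first by apply: is_cvg_nneseries => k _ _; rewrite lee_fin; apply: a0.
apply: nearW => n; rewrite sumEFin lee_fin.
apply: (@le_trans _ _ (\sum_(0 <= k < K + n) a k)).
  rewrite (big_cat_nat _ (leq_addl K n)) //= lerDl.
  by apply: sumr_ge0 => k _.
rewrite (big_cat_nat _ (leq_addr n K)) //=.
have H1 : \sum_(0 <= k < K) a k <= D * B.
  apply: (@le_trans _ _ (\sum_(0 <= k < K) u k * (D * c * Cf K.+1))).
    apply: ler_sum_nat => k /andP [_ Hk]; apply: ler_wpM2l => //.
    apply: (le_trans (pp_le k)); apply: ler_wpM2l.
      by apply: mulr_ge0; apply: ltW.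
    by apply: Cmono.
  rewrite -mulr_suml /B seriesEnat /= le_eqVlt; apply/orP; left; apply/eqP; ring.
have H2 : \sum_(K <= k < K + n) a k <= 4^-1.
  apply: (@le_trans _ _ (\sum_(K <= k < K + n) u k)).
    apply: ler_sum_nat => k _; rewrite /a.
    by have := expR_gt0 (- (D * c * Cf k.+2)); have := u0 k; nra.
  rewrite -sub_series_geq ?leq_addr //.
  have Hle : series u (K + n) <= limn (series u).
    apply: nondecreasing_cvgn_le => // x y Hxy; rewrite !seriesEnat /=.
    rewrite (big_cat_nat _ Hxy) //= lerDl; by apply: sumr_ge0 => k _.
  have := ler_norm (limn (series u) - series u K); lra.
have : D * B <= 4^-1 by nra.
lra.
Qed.
Lemma zero_of_small (R : realType) (r K : R) :
  0 <= K -> (forall n : nat, r <= K / n.+1%:R) -> r <= 0.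
Proof.
move=> K0 H; rewrite leNgt; apply/negP => r0.
have KR0 : 0 <= K / r by apply: divr_ge0 => //; apply: ltW.
set n := Num.Def.archi_bound (K / r).
have h1 : K / r < n.+1%:R.
  apply: (lt_le_trans (archi_boundP KR0)); rewrite ler_nat; exact: leqnSn.
have h2 := H n.
set m := n.+1%:R in h1 h2.
have m0 : 0 < m by rewrite /m ltr0Sn.
have e1 : K / r * r = K by rewrite divfK //; apply/lt0r_neq0.
have e2 : K / m * m = K by rewrite divfK //; apply/lt0r_neq0.
set a := K / r in e1 h1 KR0; set b := K / m in e2 h2.
nra.
Qed.

Lemma ereal_zero (R : realType) (x : \bar R) (K : R) :
  (0 <= x)%E -> 0 <= K -> (forall n : nat, (x <= (K / n.+1%:R)%:E)%E) -> x = 0%E.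
Proof.
move=> x0 K0 H; case: x x0 H => [r| |] //= r0 H.
  have : r <= 0 by apply: (@zero_of_small R r K K0) => n; rewrite -lee_fin; apply: H.
  by rewrite lee_fin in r0; move=> h; congr (_%:E); apply/eqP; rewrite eq_le h r0.
by have := H 0%N; rewrite leNgt ltey.
Qed.

Lemma half_pow_le (R : realType) (n : nat) : (2^-1 : R) ^+ n <= n.+1%:R^-1.
Proof.
rewrite exprVn lef_pV2 ?posrE ?exprn_gt0 ?ltr0Sn //.
by rewrite -natrX ler_nat ltn_expl.
Qed.
Lemma tree_bad (R : realType) (rho : nat -> R) d (Omega : measurableType d)
  (P : probability Omega R) (xi : seq nat -> Omega -> nat) (pp : nat -> R) :
  (forall u, discrete_rv (xi u)) ->
  mutually_independent P setT xi ->
  (forall u k, P (xi u @^-1` [set k]) = (rho k)%:E) ->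
  (forall k, 0 <= rho k) -> (forall k, 0 <= pp k) ->
  (\sum_(k <oo) ((k%:R * rho k * pp k)%:E) <= (2^-1)%:E)%E ->
  forall a (eps : R), 0 < eps ->
  P (\bigcap_n [set w | eps <= Zf pp (xi^~ w) a n]) = 0%E.
Proof.
move=> Hd Hi Hl rho0 pp0 Hm a eps eps0.
have mZ := @Zf_measurable R d Omega xi pp Hd.
pose A n := [set w | eps <= Zf pp (xi^~ w) a n].
have mA n : measurable (A n).
  have := mZ n a measurableT _ (measurable_itv `[eps, +oo[%R); rewrite setTI.
  congr (measurable _); apply/seteqP; split => w /=; by rewrite in_itv /= andbT.
apply: (@ereal_zero R _ eps^-1); first exact: measure_ge0.
  by rewrite invr_ge0; apply: ltW.
move=> n.
apply: (@le_trans _ _ (P (A n))).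
  apply: le_measure; rewrite ?inE //; first by apply: bigcapT_measurable.
  by move=> w /(_ n I).
have h : (eps%:E * P (A n) <= ((2^-1) ^+ n)%:E)%E.
  rewrite -[X in (_ * P X)%E]setIT -integral_indic // -ge0_integralZl_EFin //;
   try (by apply/measurable_EFinP; apply: measurable_realfun.measurable_indic);
   try (by move=> w _; rewrite lee_fin indicE ler0n);
   try (by apply: ltW).
  have := @annealed R rho d Omega P xi pp Hd Hi Hl rho0 pp0 Hm n a [::] isT (fun v (hv : v \in [::]) => False_ind _ (notF hv)).
  rewrite big_nil mulr1; apply: le_trans.
  apply: ge0_le_integral => //.
  - by move=> w _; rewrite -EFinM lee_fin; apply: mulr_ge0; [apply: ltW|rewrite indicE ler0n].
  - apply/measurable_EFinP; apply: measurable_realfun.measurable_funM.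
      exact: measurable_cst.
    exact: measurable_realfun.measurable_indic.
  - apply/measurable_EFinP; apply: measurable_realfun.measurable_funM.
      apply: measurable_realfun.measurable_indic; exact: EL_measurable.
    exact: mZ.
  move=> w _; rewrite -EFinM lee_fin indic_EL /= mul1r indicE.
  case: (boolP (w \in _)) => [|_]; last by rewrite mulr0; apply: Zf_ge0.
  by rewrite inE /= mulr1.
have fin : P (A n) \is a fin_num by rewrite fin_num_measure.
rewrite -(fineK fin) lee_fin; rewrite -(fineK fin) -EFinM lee_fin in h.
apply: (@le_trans _ _ (eps^-1 * (2^-1) ^+ n)).
  rewrite -[X in X <= _](mulKf (lt0r_neq0 eps0)); apply: ler_wpM2l => //.
  by rewrite invr_ge0; apply: ltW.
apply: ler_wpM2l; first by rewrite invr_ge0; apply: ltW.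
exact: half_pow_le.
Qed.
Lemma cl_le x v : (cl_size (gw_nb x) v <= (x v).+2)%N.
Proof.
rewrite /cl_size /gw_nb size_cat size_map size_iota ltnS.
by case: v => [|y v] //=; rewrite add1n.
Qed.

Theorem mainTheorem9 (R : realType)
  (* offspring distribution rho on N_0 *)
  (rho : nat -> R)
  (rho_ge0 : forall k, 0 <= rho k)
  (rho_sum1 : series rho @ \oo --> (1 : R))
  (rho_mean : cvg (series (fun k => k%:R * rho k) @ \oo))
  (* the GW(rho) tree: i.i.d. child numbers on a probability space *)
  (d : measure_display) (Omega : measurableType d) (P : probability Omega R)
  (xi : seq nat -> Omega -> nat)
  (xi_rv : forall u, discrete_rv (xi u))
  (xi_indep : mutually_independent P setT xi)
  (xi_law : forall u k, P (xi u @^-1` [set k]) = (rho k)%:E)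
  (* parameters of finite dissociability *)
  (dJ : measure_display) (J : measurableType dJ)
  (J_countable : countable [set: J])
  (vs : {finite_measure set J -> \bar R})
  (vs_pos : (0 < vs setT)%E)
  (C : nat -> R -> R)
  (C_pos : forall k T, (1 <= k)%N -> 0 <= T -> 0 < C k T)
  (C_mono_k : forall k k' T, (1 <= k)%N -> (k <= k')%N -> 0 <= T -> C k T <= C k' T)
  (C_mono_T : forall k T T', (1 <= k)%N -> 0 <= T -> T <= T' -> C k T <= C k T') :
  {ae P, forall w, finitely_dissociable vs C (gw_vert (xi^~ w)) (gw_nb (xi^~ w))}.
Proof.
have vsfin : vs setT \is a fin_num by rewrite fin_num_measure.
have c0 : 0 < fine (vs setT) by rewrite -lte_fin fineK.
set c := fine (vs setT) in c0.
have HD : forall N : nat, exists D, 0 < D /\ D <= 1 /\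
   (\sum_(k <oo) ((k%:R * rho k * (1 - expR (- (D * c * C k.+2 N%:R))))%:E) <= (2^-1)%:E)%E.
  move=> N; apply: (@choose_delta R rho c (fun k => C k N%:R)) => //.
    by move=> k Hk; apply: C_pos => //; apply: ler0n.
  by move=> k k' Hk Hkk'; apply: C_mono_k => //; apply: ler0n.
have [Dn HDn] := choice HD.
pose pp N k := 1 - expR (- (Dn N * c * C k.+2 N%:R)).
have pp0 N k : 0 <= pp N k.
  have [D0 _] := HDn N.
  have : expR (- (Dn N * c * C k.+2 N%:R)) <= 1.
    rewrite expR_le1 oppr_le0; apply: mulr_ge0; first by apply: mulr_ge0; apply: ltW.
    by apply: ltW; apply: C_pos => //; apply: ler0n.
  rewrite /pp; lra.
pose G w := forall N a (j : nat), exists n, Zf (pp N) (xi^~ w) a n < j.+1%:R^-1.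
have aeG : {ae P, forall w, G w}.
  pose Bad (t : nat * seq nat * nat) :=
    \bigcap_n [set w | t.2.+1%:R^-1 <= Zf (pp t.1.1) (xi^~ w) t.1.2 n].
  pose F k := if unpickle k is Some t then Bad t else set0.
  apply: (@negligibleS _ _ _ _ (\bigcup_k F k)); last first.
    apply: negligible_bigcup => k; rewrite /F; case: unpickle => [t|]; last first.
      exact: negligible_set0.
    exists (Bad t); split => //.
      apply: bigcapT_measurable => n.
      have := @Zf_measurable R d Omega xi (pp t.1.1) xi_rv n t.1.2 measurableT _
        (measurable_itv `[t.2.+1%:R^-1, +oo[%R); rewrite setTI.
      congr (measurable _); apply/seteqP; split => w /=; by rewrite in_itv /= andbT.
    apply: (@tree_bad R rho d Omega P xi (pp t.1.1)) => //; first exact: (HDn t.1.1).2.2.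
  move=> w /= nG.
  have [t Ht] : exists t, Bad t w.
    apply: contrapT => H; apply: nG => N a j; apply: contrapT => H2; apply: H.
    exists (N, a, j) => n _ /=; rewrite leNgt; apply/negP => Hlt; apply: H2; by exists n.
  by exists (pickle t) => //; rewrite /F pickleK.
apply: (negligibleS _ aeG) => w /= nfd Gw; apply: nfd.
set x := xi^~ w.
move=> T T0.
set N := Num.Def.archi_bound T.
have TN : T <= N%:R by apply: ltW; apply: archi_boundP; apply: ltW.
have [DN0 [DN1 _]] := HDn N.
exists (Num.min T (Dn N)); split; first by rewrite lt_min T0 DN0.
split; first by rewrite ge_min lexx.
move=> d' Om P' act Hd Hi Hlaw.
have Hpp : forall v, gw_vert x v -> (P' (act v @^-1` [set true]) <= (pp N (x v))%:E)%E.
  move=> v Hv; rewrite Hlaw // lee_fin /pp lerD2l lerN2 ler_expR lerN2.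
  have cl1 : (1 <= cl_size (gw_nb x) v)%N by [].
  apply: ler_pM.
  - by apply: mulr_ge0; [rewrite le_min (ltW T0) (ltW DN0)|apply: ltW].
  - by apply: ltW; apply: C_pos => //; apply: ltW.
  - apply: ler_pM; [rewrite le_min (ltW T0) (ltW DN0)//|apply: ltW => //|rewrite ge_min lexx orbT//|exact: lexx].
  - apply: (@le_trans _ _ (C (cl_size (gw_nb x) v) N%:R)).
      by apply: C_mono_T => //; apply: ltW.
    by apply: C_mono_k; [exact: cl1|exact: cl_le|exact: ler0n].
pose F' k := if unpickle k is Some a then
  (if pselect (gw_vert x a) is left _ then \bigcap_n PathS x act a n else set0) else set0.
apply: (@negligibleS _ _ _ _ (\bigcup_k F' k)); last first.
  apply: negligible_bigcup => k; rewrite /F'; case: unpickle => [a|]; last first.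
    exact: negligible_set0.
  case: pselect => [Va|_]; last exact: negligible_set0.
  exists (\bigcap_n PathS x act a n); split => //.
    by apply: bigcapT_measurable => n; apply: PathS_measurable.
  apply: (@ereal_zero R _ 1); [exact: measure_ge0|exact: ler01|] => j.
  have [n Hn] := Gw N a j.
  apply: (@le_trans _ _ (P' (PathS x act a n))).
    apply: le_measure; rewrite ?inE.
    - by apply: bigcapT_measurable => m; apply: PathS_measurable.
    - exact: PathS_measurable.
    - by move=> o /(_ n I).
  apply: (@le_trans _ _ (Zf (pp N) x a n)%:E).
    have := @quenched R d' Om P' act x (pp N) Hd Hi (pp0 N) Hpp n a [::] Va isT
      (fun v (hv : v \in [::]) => False_ind _ (notF hv)) (fun v (hv : v \in [::]) => False_ind _ (notF hv)).
    rewrite big_nil mul1r.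
    have -> : actL act [::] `&` PathS x act a n = PathS x act a n.
      by apply/seteqP; split => o; [case|move=> h; split].
    by [].
  by rewrite lee_fin mul1r; apply: ltW.
move=> o /= nfin.
have [a [Va Pa]] : exists a, gw_vert x a /\ forall n, pathb x (act^~ o) a n.
  apply: contrapT => H; apply: nfin; apply: graph_finite => a Va fa.
  apply: contrapT => H2; apply: H; exists a; split => // n.
  by apply: contrapT => H3; apply: H2; exists n; apply/negP.
exists (pickle a) => //; rewrite /F' pickleK; case: pselect => // _ n _.
exact: Pa.
Qed.
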